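(* Let $G\in\mathfrak D_4$ and suppose $G$ contains nine distinct vertices $a_i,b_i,c_i$ ($i\in\mathbb Z/3\mathbb Z$) such that $a_ic_i,\ b_ic_i\in E(G)$ for all $i$ and $a_ib_j\in E(G)$ for all $i\ne j$ (i.e. a subgraph isomorphic to the graph $N$ with these edges). Then for every $i\in\mathbb Z/3\mathbb Z$, either $c_{i-1}c_{i+1}\in E(G)$, or there is a vertex of $G$ adjacent to all of $a_i,b_i,c_{i-1},c_{i+1}$.
   Context: $\mathfrak D_4$ is the class of (finite) maximal triangle-free graphs satisfying property $\mathscr{D}_4$. Maximal triangle-free: no triangle, and adding any new edge creates a triangle. Property $\mathscr{D}_k$: for every $m\in\{1,\dots,k\}$ and every sequence $x_1,\dots,x_{3m}$ of (not necessarily distinct) vertices there is a vertex $y$ with $|\{i\in[3m]: x_iy\in E(G)\}|\ge m+1$. *)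

(* Defs.v *)
From mathcomp Require Import all_boot.
Set Implicit Arguments.
Unset Strict Implicit.
Unset Printing Implicit Defensive.

Definition simple_graph (T : finType) (e : rel T) : Prop :=
  symmetric e /\ irreflexive e.

Definition triangle_free (T : finType) (e : rel T) : Prop :=
  forall x y z : T, ~ [&& e x y, e y z & e x z].

(* Maximal triangle-free: triangle-free, and adding any new edge xy
   (x <> y, xy not an edge) creates a triangle, i.e. x,y have a common neighbour. *)
Definition maximal_triangle_free (T : finType) (e : rel T) : Prop :=
  triangle_free e /\
  forall x y : T, x != y -> ~~ e x y -> exists z : T, e x z && e z y.

Definition property_D (k : nat) (T : finType) (e : rel T) : Prop :=
  forall m : nat, 1 <= m <= k ->
  forall x : 'I_(3 * m) -> T,
  exists y : T, m.+1 <= #|[set i : 'I_(3 * m) | e (x i) y]|.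

Definition in_D4 (T : finType) (e : rel T) : Prop :=
  simple_graph e /\ maximal_triangle_free e /\ property_D 4 e.

Definition nxt3 (i : 'I_3) : 'I_3 := inord ((i + 1) %% 3).
Definition prv3 (i : 'I_3) : 'I_3 := inord ((i + 2) %% 3).

(* Main.v *)
Require Import Defs.
From mathcomp Require Import all_boot.
Set Implicit Arguments. Unset Strict Implicit. Unset Printing Implicit Defensive.

Lemma card_nth (T : Type) (x0 : T) (s : seq T) (Q : pred T) n :
  size s = n -> #|[set k : 'I_n | Q (nth x0 s k)]| = count Q s.
Proof.
move=> H; case: n / H.
rewrite cardsE cardE /enum_mem size_filter -enumT.
rewrite -[in RHS](mkseq_nth x0 s) /mkseq -val_enum_ord count_map count_map.
by apply: eq_count => k.
Qed.

Lemma D_seq (T : finType) (e : rel T) (x0 : T) : property_D 4 e ->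
  forall s : seq T, size s %% 3 = 0 -> 0 < size s %/ 3 <= 4 ->
  exists y, size s %/ 3 < count (fun v => e v y) s.
Proof.
move=> HD s Hmod Hm.
have Hs : size s = 3 * (size s %/ 3).
  by rewrite {1}(divn_eq (size s) 3) Hmod addn0 mulnC.
have [y Hy] := HD (size s %/ 3) Hm (fun k : 'I_(3 * (size s %/ 3)) => nth x0 s k).
exists y; by rewrite -(card_nth x0 (fun v => e v y) Hs).
Qed.

Fixpoint allb (n : nat) (P : seq bool -> bool) : bool :=
  match n with
  | 0 => P [::]
  | n'.+1 => allb n' (fun s => P (true :: s)) && allb n' (fun s => P (false :: s))
  end.

Lemma allbP n P : allb n P -> forall bs, size bs = n -> P bs.
Proof.
elim: n P => [|n IH] P /=; first by move=> HP [|b bs] //.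
move=> /andP[H1 H2] [|b bs] //= [Hs].
by case: b; [apply: (IH _ H1) | apply: (IH _ H2)].
Qed.

Inductive ptree := Leaf of seq nat | Move of seq nat & pkids
with pkids := KNil | KCons of seq nat & ptree & pkids.

Scheme tree_ind2 := Induction for ptree Sort Prop
with kids_ind2 := Induction for pkids Sort Prop.
Combined Scheme tree_kids_ind from tree_ind2, kids_ind2.


Definition consistent (E : seq (nat * nat)) (bs : seq bool) :=
  all (fun p => ~~ (nth false bs p.1 && nth false bs p.2)) E.
Definition covered (bs : seq bool) (F : seq nat) := all (nth false bs) F.
Definition heavy (ix : seq nat) (bs : seq bool) := size ix %/ 3 < count (nth false bs) ix.
Definition valid_ix n (ix : seq nat) :=
  [&& size ix %% 3 == 0, 0 < size ix %/ 3 <= 4 & all (fun i => i < n) ix].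
Definition bnd n (F : seq nat) := all (fun i => i < n) F.
Definition bndE n (E : seq (nat * nat)) := all (fun p => (p.1 < n) && (p.2 < n)) E.

Fixpoint kidsets (ks : pkids) : seq (seq nat) :=
  match ks with KNil => [::] | KCons X _ ks' => X :: kidsets ks' end.

Fixpoint check (fams : seq (seq nat)) (n : nat) (E : seq (nat * nat)) (t : ptree) {struct t} : bool :=
  match t with
  | Leaf ix => valid_ix n ix && bndE n E && all (bnd n) fams &&
      allb n (fun bs => consistent E bs ==> heavy ix bs ==> has (covered bs) fams)
  | Move ix ks => valid_ix n ix && bndE n E && all (bnd n) fams &&
      allb n (fun bs => consistent E bs ==> heavy ix bs ==>
                 has (covered bs) fams || has (covered bs) (kidsets ks)) &&
      checkk fams n E ks
  end
with checkk (fams : seq (seq nat)) (n : nat) (E : seq (nat * nat)) (ks : pkids) {struct ks} : bool :=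
  match ks with
  | KNil => true
  | KCons X t ks' => bnd n X && check fams n.+1 (E ++ [seq (i, n) | i <- X]) t && checkk fams n E ks'
  end.

Section Sound.
Variables (T : finType) (e : rel T) (x0 : T).
Hypotheses (He : symmetric e) (Htf : triangle_free e) (HD : property_D 4 e).
Variable fams : seq (seq nat).

Definition edges_ok (vs : seq T) (E : seq (nat * nat)) :=
  all (fun p => e (nth x0 vs p.1) (nth x0 vs p.2)) E.

Definition concl (vs : seq T) :=
  exists2 F, F \in fams & exists y, all (fun i => e (nth x0 vs i) y) F.

Lemma step (vs : seq T) E ix : edges_ok vs E -> bndE (size vs) E -> valid_ix (size vs) ix ->
  exists y, consistent E [seq e v y | v <- vs] && heavy ix [seq e v y | v <- vs].
Proof.
move=> Hok HE /and3P[/eqP Hmod Hm /allP Hix].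
have Hm1 : size [seq nth x0 vs i | i <- ix] %% 3 = 0 by rewrite size_map.
have Hm2 : 0 < size [seq nth x0 vs i | i <- ix] %/ 3 <= 4 by rewrite size_map.
have [y Hy] := D_seq x0 HD Hm1 Hm2.
exists y; apply/andP; split.
  apply/allP => -[i j] Hp /=.
  move/allP: HE => /(_ _ Hp) /andP[Hi Hj].
  move/allP: Hok => /(_ _ Hp) /= Hij.
  rewrite (nth_map x0) // (nth_map x0) //.
  apply/negP => /andP[Hiy Hjy].
  by apply: (Htf (x := nth x0 vs i) (y := nth x0 vs j) (z := y)); rewrite Hij Hjy Hiy.
rewrite /heavy; move: Hy; rewrite size_map count_map.
congr (_ < _); apply: eq_in_count => i /Hix Hi /=.
by rewrite (nth_map x0).
Qed.

Lemma kid_bnd fs n E ks X : checkk fs n E ks -> X \in kidsets ks -> bnd n X.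
Proof.
elim: ks => //= X' t ks IH /andP[/andP[HX _] Hks]; rewrite inE => /orP[/eqP ->//|].
exact: IH.
Qed.

Lemma nth_rcons_lt (vs : seq T) y i : i < size vs -> nth x0 (rcons vs y) i = nth x0 vs i.
Proof. by move=> Hi; rewrite nth_rcons Hi. Qed.

Lemma sound_all :
  (forall t vs E, edges_ok vs E -> check fams (size vs) E t -> concl vs) /\
  (forall ks vs E, edges_ok vs E -> bndE (size vs) E -> all (bnd (size vs)) fams -> checkk fams (size vs) E ks ->
     forall y X, X \in kidsets ks -> all (fun i => e (nth x0 vs i) y) X -> concl vs).
Proof.
apply (tree_kids_ind
  (P := fun t => forall vs E, edges_ok vs E -> check fams (size vs) E t -> concl vs)
  (P0 := fun ks => forall vs E, edges_ok vs E -> bndE (size vs) E -> all (bnd (size vs)) fams -> checkk fams (size vs) E ks ->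
     forall y X, X \in kidsets ks -> all (fun i => e (nth x0 vs i) y) X -> concl vs)).
- move=> ix vs E Hok /= /andP[/andP[/andP[Hix HE] Hf] Hall].
  have [y /andP[Hc Hh]] := step Hok HE Hix.
  move: (allbP Hall (size_map (fun v => e v y) vs)) => /=; rewrite Hc Hh /= => /hasP[F HF Hcov].
  exists F => //; exists y; apply/allP => i Hi.
  move/allP: Hf => /(_ _ HF) /allP /(_ _ Hi) Hin.
  by move/allP: Hcov => /(_ _ Hi); rewrite (nth_map x0).
- move=> ix ks IHks vs E Hok /= /andP[/andP[/andP[/andP[Hix HE] Hf] Hall] Hks].
  have [y /andP[Hc Hh]] := step Hok HE Hix.
  move: (allbP Hall (size_map (fun v => e v y) vs)) => /=; rewrite Hc Hh /= => /orP[] /hasP[F HF Hcov].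
    exists F => //; exists y; apply/allP => i Hi.
    move/allP: Hf => /(_ _ HF) /allP /(_ _ Hi) Hin.
    by move/allP: Hcov => /(_ _ Hi); rewrite (nth_map x0).
  apply: (IHks vs E Hok HE Hf Hks y F HF).
  apply/allP => i Hi.
  have Hin : i < size vs.
    by move/allP: (kid_bnd Hks HF) => /(_ _ Hi).
  by move/allP: Hcov => /(_ _ Hi); rewrite (nth_map x0).
- by [].
- move=> X t IHt ks IHks vs E Hok HE Hf /= /andP[/andP[HX Ht] Hks] y X0.
  rewrite inE => /orP[/eqP -> HXy|HX0 HX0y]; last first.
    exact: (IHks vs E Hok HE Hf Hks y X0 HX0 HX0y).
  have Hok' : edges_ok (rcons vs y) (E ++ [seq (i, size vs) | i <- X]).
    rewrite /edges_ok all_cat; apply/andP; split.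
      apply/allP => -[i j] Hp /=.
      move/allP: HE => /(_ _ Hp) /andP[Hi Hj].
      move/allP: Hok => /(_ _ Hp) /=.
      by rewrite !nth_rcons_lt.
    rewrite all_map; apply/allP => i Hi /=.
    move/allP: HX => /(_ _ Hi) Hin.
    rewrite nth_rcons_lt // nth_rcons ltnn eqxx.
    by move/allP: HXy => /(_ _ Hi).
  have := IHt (rcons vs y) _ Hok'; rewrite size_rcons => /(_ Ht) [F HF [y' Hy']].
  exists F => //; exists y'; apply/allP => i Hi.
  move/allP: Hf => /(_ _ HF) /allP /(_ _ Hi) Hin.
  by move/allP: Hy' => /(_ _ Hi); rewrite nth_rcons_lt.
Qed.

End Sound.
Definition pet_E : seq (nat * nat) := [:: (0, 6); (3, 6); (1, 7); (4, 7); (2, 8); (5, 8); (0, 4); (0, 5); (1, 3); (1, 5); (2, 3); (2, 4); (9, 7); (9, 8); (9, 6)].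
Definition pet_tree : ptree := (Move [:: 1; 2; 3; 4; 5; 6; 7; 8; 9] (KCons [:: 2; 5; 6; 7] (Move [:: 0; 1; 3; 4; 5; 6; 7; 8; 9] (KCons [:: 1; 4; 6; 8] (Move [:: 0; 1; 2; 3; 4; 5; 7; 8; 9] (KCons [:: 0; 1; 2; 9] (Leaf [:: 0; 1; 2; 4; 5; 6; 7; 8; 9; 10; 11; 12]) (KCons [:: 3; 4; 5; 9] (Leaf [:: 1; 2; 3; 4; 5; 6; 7; 8; 9; 10; 11; 12]) KNil))) (KCons [:: 3; 4; 5; 9] (Move [:: 0; 1; 2; 3; 4; 6; 7; 8; 9] (KCons [:: 1; 4; 6; 8] (Leaf [:: 1; 2; 3; 4; 5; 6; 7; 8; 9; 10; 11; 12]) (KCons [:: 0; 1; 2; 9] (Leaf [:: 0; 1; 2; 3; 4; 5; 6; 7; 9; 10; 11; 12]) KNil))) KNil))) (KCons [:: 1; 4; 6; 8] (Move [:: 0; 2; 3; 4; 5; 6; 7; 8; 9] (KCons [:: 2; 5; 6; 7] (Move [:: 0; 1; 2; 3; 4; 5; 7; 8; 9] (KCons [:: 0; 1; 2; 9] (Leaf [:: 0; 1; 2; 4; 5; 6; 7; 8; 9; 10; 11; 12]) (KCons [:: 3; 4; 5; 9] (Leaf [:: 1; 2; 3; 4; 5; 6; 7; 8; 9; 10; 11; 12]) KNil))) (KCons [:: 3; 4; 5; 9] (Move [:: 0; 1; 2; 3; 5; 6; 7; 8; 9] (KCons [:: 2; 5; 6; 7] (Leaf [:: 1; 2; 3; 4;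 5; 6; 7; 8; 9; 10; 11; 12]) (KCons [:: 0; 1; 2; 9] (Leaf [:: 0; 1; 2; 3; 4; 5; 6; 8; 9; 10; 11; 12]) KNil))) KNil))) (KCons [:: 3; 4; 5; 9] (Move [:: 0; 1; 2; 4; 5; 6; 7; 8; 9] (KCons [:: 2; 5; 6; 7] (Move [:: 0; 1; 2; 3; 4; 6; 7; 8; 9] (KCons [:: 1; 4; 6; 8] (Leaf [:: 1; 2; 3; 4; 5; 6; 7; 8; 9; 10; 11; 12]) (KCons [:: 0; 1; 2; 9] (Leaf [:: 0; 1; 2; 3; 4; 5; 6; 7; 9; 10; 11; 12]) KNil))) (KCons [:: 1; 4; 6; 8] (Move [:: 0; 1; 2; 3; 5; 6; 7; 8; 9] (KCons [:: 2; 5; 6; 7] (Leaf [:: 1; 2; 3; 4; 5; 6; 7; 8; 9; 10; 11; 12]) (KCons [:: 0; 1; 2; 9] (Leaf [:: 0; 1; 2; 3; 4; 5; 6; 8; 9; 10; 11; 12]) KNil))) (KCons [:: 0; 1; 2; 9] (Move [:: 0; 1; 2; 3; 4; 5; 6; 7; 8] (KCons [:: 2; 5; 6; 7] (Leaf [:: 0; 1; 2; 3; 4; 5; 6; 7; 9; 10; 11; 12]) (KCons [:: 1; 4; 6; 8] (Leaf [:: 0; 1; 2; 3; 4; 5; 6; 8; 9; 10; 11; 12]) KNil))) KNil)))) KNil)))).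
Definition np_E : seq (nat * nat) := [:: (0, 6); (3, 6); (1, 7); (4, 7); (2, 8); (5, 8); (0, 4); (0, 5); (1, 3); (1, 5); (2, 3); (2, 4); (9, 7); (9, 8); (10, 6); (10, 9)].
Definition np_tree : ptree := (Move [:: 0; 1; 2; 3; 4; 5; 7; 8; 9] (KCons [:: 0; 1; 2; 9] (Move [:: 0; 1; 2; 3; 4; 5; 6; 7; 8] (KCons [:: 2; 5; 6; 7] (Move [:: 0; 1; 3; 4; 5; 6; 7; 8; 9] (KCons [:: 1; 4; 6; 8] (Leaf [:: 0; 1; 2; 4; 5; 6; 7; 8; 9; 11; 12; 13]) (KCons [:: 3; 4; 5; 9] (Leaf [:: 0; 1; 2; 3; 4; 5; 6; 7; 9; 11; 12; 13]) (KCons [:: 1; 4; 6; 9] (Leaf [:: 0; 1; 2; 4; 5; 6; 7; 8; 9; 11; 12; 13]) (KCons [:: 4; 5; 6; 9] (Leaf [:: 0; 1; 2; 3; 4; 5; 6; 7; 9; 11; 12; 13]) KNil))))) (KCons [:: 1; 4; 6; 8] (Move [:: 0; 2; 3; 4; 5; 6; 7; 8; 9] (KCons [:: 2; 5; 6; 7] (Leaf [:: 0; 1; 2; 4; 5; 6; 7; 8; 9; 11; 12; 13]) (KCons [:: 3; 4; 5; 9] (Leaf [:: 0; 1; 2; 3; 4; 5; 6; 8; 9; 11; 12; 13]) (KCons [:: 2; 5; 6; 9] (Leaf [:: 0; 1; 2; 4; 5; 6; 7; 8; 9; 11; 12; 13]) (KCons [:: 4; 5; 6; 9] (Leaf [::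 0; 1; 2; 3; 4; 5; 6; 8; 9; 11; 12; 13]) KNil))))) KNil))) (KCons [:: 3; 4; 5; 9] (Move [:: 0; 1; 2; 3; 4; 5; 6; 7; 8] (KCons [:: 2; 5; 6; 7] (Move [:: 0; 1; 2; 3; 4; 6; 7; 8; 9] (KCons [:: 1; 4; 6; 8] (Leaf [:: 1; 2; 3; 4; 5; 6; 7; 8; 9; 11; 12; 13]) (KCons [:: 0; 1; 2; 9] (Leaf [:: 0; 1; 2; 3; 4; 5; 6; 7; 9; 11; 12; 13]) (KCons [:: 1; 2; 6; 9] (Leaf [:: 0; 1; 2; 3; 4; 5; 6; 7; 9; 11; 12; 13]) (KCons [:: 1; 4; 6; 9] (Leaf [:: 1; 2; 3; 4; 5; 6; 7; 8; 9; 11; 12; 13]) KNil))))) (KCons [:: 1; 4; 6; 8] (Move [:: 0; 1; 2; 3; 5; 6; 7; 8; 9] (KCons [:: 2; 5; 6; 7] (Leaf [:: 1; 2; 3; 4; 5; 6; 7; 8; 9; 11; 12; 13]) (KCons [:: 0; 1; 2; 9] (Leaf [:: 0; 1; 2; 3; 4; 5; 6; 8; 9; 11; 12; 13]) (KCons [:: 1; 2; 6; 9] (Leaf [:: 0; 1; 2; 3; 4; 5; 6; 8; 9; 11; 12; 13]) (KCons [:: 2; 5; 6; 9] (Leaf [:: 1; 2; 3; 4; 5; 6; 7; 8; 9; 11; 12; 13]) KNil))))) KNil))) KNil))).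

Definition G0 : seq nat := [:: 0; 3; 7; 8].

Lemma pet_ok : check [:: G0] 10 pet_E pet_tree.
Proof. by vm_compute. Qed.
Lemma np_ok : check [:: G0; [:: 6; 7; 8]; [:: 0; 3; 9]] 11 np_E np_tree.
Proof. by vm_compute. Qed.

Section Core.
Variables (T : finType) (e : rel T).
Hypothesis HG : in_D4 e.
Variables (a0 a1 a2 b0 b1 b2 c0 c1 c2 : T).
Hypotheses (H1 : e a0 c0) (H2 : e b0 c0) (H3 : e a1 c1) (H4 : e b1 c1)
  (H5 : e a2 c2) (H6 : e b2 c2) (H7 : e a0 b1) (H8 : e a0 b2) (H9 : e a1 b0)
  (H10 : e a1 b2) (H11 : e a2 b0) (H12 : e a2 b1).

Let Hsym : symmetric e. Proof. by case: HG => [[]]. Qed.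
Let Htf : triangle_free e. Proof. by case: HG => _ [[]]. Qed.
Let HD : property_D 4 e. Proof. by case: HG => _ []. Qed.
Let Hmax : forall x y : T, x != y -> ~~ e x y -> exists z : T, e x z && e z y.
Proof. by case: HG => _ [[]]. Qed.

Lemma pet_lemma c0' z : e a0 c0' -> e b0 c0' -> e z c1 -> e z c2 -> e z c0' ->
  exists v, [&& e v a0, e v b0, e v c1 & e v c2].
Proof.
move=> Ha Hb Hz1 Hz2 Hz0.
have [] := (sound_all a0 Htf HD [:: G0]).1 pet_tree [:: a0; a1; a2; b0; b1; b2; c0'; c1; c2; z] pet_E.
- by rewrite /edges_ok /= Ha Hb H3 H4 H5 H6 H7 H8 H9 H10 H11 H12 Hz1 Hz2 Hz0.
- exact: pet_ok.
move=> F; rewrite inE => /eqP -> [y /=]; rewrite andbT => /and4P[Ha0 Hb0 Hc1 Hc2].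
by exists y; rewrite ![e y _]Hsym Ha0 Hb0 Hc1 Hc2.
Qed.

Lemma core : c1 != c2 -> e c1 c2 \/ exists v, [&& e v a0, e v b0, e v c1 & e v c2].
Proof.
move=> Hne; case Hc12: (e c1 c2); [by left | right].
have [z /andP[Hz1 Hz2]] := Hmax Hne (negbT Hc12).
rewrite Hsym in Hz1.
case Hcz: (e z c0); first exact: (pet_lemma H1 H2 Hz1 Hz2 Hcz).
case: (eqVneq c0 z) => [Heq|Hne2].
  by exists z; rewrite -Heq in Hz1 Hz2 *; rewrite Hz1 Hz2 Hsym H1 Hsym H2.
have Hcz' : ~~ e c0 z by rewrite Hsym Hcz.
have [w /andP[Hw0 Hwz]] := Hmax Hne2 Hcz'.
rewrite Hsym in Hw0.
have [] := (sound_all a0 Htf HD [:: G0; [:: 6; 7; 8]; [:: 0; 3; 9]]).1 np_tree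
  [:: a0; a1; a2; b0; b1; b2; c0; c1; c2; z; w] np_E.
- by rewrite /edges_ok /= H1 H2 H3 H4 H5 H6 H7 H8 H9 H10 H11 H12 Hz1 Hz2 Hw0 Hwz.
- exact: np_ok.
move=> F; rewrite !inE => /or3P[] /eqP -> [y /=]; rewrite andbT.
- move=> /and4P[Ha0 Hb0 Hc1 Hc2].
  by exists y; rewrite ![e y _]Hsym Ha0 Hb0 Hc1 Hc2.
- move=> /and3P[Hc0 Hc1 Hc2].
  have Hy1 : e y c1 by rewrite Hsym.
  have Hy2 : e y c2 by rewrite Hsym.
  have Hy0 : e y c0 by rewrite Hsym.
  exact: (pet_lemma H1 H2 Hy1 Hy2 Hy0).
- move=> /and3P[Ha0 Hb0 Hzy].
  exact: (pet_lemma Ha0 Hb0 Hz1 Hz2 Hzy).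
Qed.

End Core.

Unset Implicit Arguments.
Lemma ord3_facts (i : 'I_3) : [&& prv3 i != i, nxt3 i != i & prv3 i != nxt3 i].
Proof.
rewrite /prv3 /nxt3 -!val_eqE /= !inordK ?ltn_mod //.
case: i => [[|[|[|k]]] Hk] //.
Qed.

Theorem mainTheorem12 (T : finType) (e : rel T) (a b c : 'I_3 -> T) :
  in_D4 e ->
  (* the nine vertices a_i, b_i, c_i are pairwise distinct *)
  injective a -> injective b -> injective c ->
  (forall i j : 'I_3, a i != b j) ->
  (forall i j : 'I_3, a i != c j) ->
  (forall i j : 'I_3, b i != c j) ->
  (forall i : 'I_3, e (a i) (c i) /\ e (b i) (c i)) ->
  (forall i j : 'I_3, i != j -> e (a i) (b j)) ->
  forall i : 'I_3,
    e (c (prv3 i)) (c (nxt3 i)) \/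
    exists v : T, [&& e v (a i), e v (b i), e v (c (prv3 i)) & e v (c (nxt3 i))].
Proof.
move=> HG _ _ Hc _ _ _ Hac Hab i.
have /and3P[Hpi Hni Hpn] := ord3_facts i.
have Hip : i != prv3 i by rewrite eq_sym.
have Hin : i != nxt3 i by rewrite eq_sym.
have Hnp : nxt3 i != prv3 i by rewrite eq_sym.
have Hne : c (prv3 i) != c (nxt3 i).
  by apply/eqP => /Hc /eqP; apply/negP.
exact: (core HG (Hac i).1 (Hac i).2 (Hac (prv3 i)).1 (Hac (prv3 i)).2
  (Hac (nxt3 i)).1 (Hac (nxt3 i)).2 (Hab _ _ Hip) (Hab _ _ Hin) (Hab _ _ Hpi)
  (Hab _ _ Hpn) (Hab _ _ Hni) (Hab _ _ Hnp) Hne).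
Qed.
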